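(* Let $R$ be a commutative ring with unit, $\mathcal{P}$ a poset satisfying the descending chain condition, $F\colon\mathcal{P}\to R\text{-mod}$ a functor, and $i\in\mathcal{P}$. If $F$ is pseudo-projective at $i$, then the natural map $\operatorname{colim}_{\mathcal{P}_{<i}}F\to F(i)$ is injective.
   Context: DCC: no infinite strictly descending chains. $\mathcal{P}_{<i}=\{j:j<i\}$, $\mathcal{P}_{\le i}=\{j:j\le i\}$. $F(j<i)$ is the image of the arrow $j\to i$, $F(i<i)=1$. $\operatorname{Im}_F(j)=\sum_{k<j}\operatorname{Im}F(k<j)$; $\max J$ is the set of maximal elements of $J$. $F$ is pseudo-projective at $i$ if for every finite $J\subset\mathcal{P}_{\le i}$ and every $\oplus_{j\in J}x_j\in\bigoplus_{j\in J}F(j)$ with $\sum_{j\in J}F(j<i)(x_j)=0$, one has $x_j\in\operatorname{Im}_F(j)$ for all $j\in\max J$. *)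

(* Defs.v *)
From HB Require Import structures.
From mathcomp Require Import all_boot all_order all_algebra.
Set Implicit Arguments. Unset Strict Implicit. Unset Printing Implicit Defensive.
Import Order.TTheory GRing.Theory.
Local Open Scope order_scope.

Section Defs.
Variables (R : comPzRingType) (d : Order.disp_t) (P : porderType d).

Definition dcc : Prop := forall f : nat -> P, ~ (forall n, f n.+1 < f n).

(* A functor F : P -> R-mod: objects F j, arrows Fm j k (meaningful for j <= k;
   values of Fm j k for j not <= k are irrelevant and never used). *)
Definition is_functor (F : P -> lmodType R) (Fm : forall j k, {linear F j -> F k}) : Prop :=
  (forall j (x : F j), Fm j j x = x) /\
  (forall j k l (x : F j), j <= k -> k <= l -> Fm j l x = Fm k l (Fm j k x)).

Definition ImF (F : P -> lmodType R) (Fm : forall j k, {linear F j -> F k})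
  (j : P) (x : F j) : Prop :=
  exists (s : seq P) (y : forall k, F k),
    (forall k, k \in s -> k < j) /\ x = (\sum_(k <- s) Fm k j (y k))%R.

Definition is_max_in (J : seq P) (j : P) : Prop :=
  j \in J /\ forall k, k \in J -> ~ (j < k).

(* F is pseudo-projective at i. Finite subsets J of P_{<=i} are given as
   duplicate-free lists; an element of (+)_{j in J} F(j) is a family x
   (only its values on J matter). *)
Definition pseudo_projective_at (F : P -> lmodType R)
  (Fm : forall j k, {linear F j -> F k}) (i : P) : Prop :=
  forall (J : seq P) (x : forall j, F j),
    uniq J -> (forall j, j \in J -> j <= i) ->
    (\sum_(j <- J) Fm j i (x j))%R = 0%R ->
    forall j, is_max_in J j -> ImF Fm (x j).

Definition cocone_lt (F : P -> lmodType R) (Fm : forall j k, {linear F j -> F k})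
  (i : P) (M : lmodType R) (g : forall j, {linear F j -> M}) : Prop :=
  forall j k (x : F j), j < k -> k < i -> g k (Fm j k x) = g j x.

Definition is_colimit_lt (F : P -> lmodType R) (Fm : forall j k, {linear F j -> F k})
  (i : P) (C : lmodType R) (iota : forall j, {linear F j -> C}) : Prop :=
  cocone_lt Fm i iota /\
  forall (M : lmodType R) (g : forall j, {linear F j -> M}),
    cocone_lt Fm i g ->
    exists h : {linear C -> M},
      (forall j (x : F j), j < i -> h (iota j x) = g j x) /\
      forall h' : {linear C -> M},
        (forall j (x : F j), j < i -> h' (iota j x) = g j x) -> forall c, h' c = h c.

End Defs.

(* Main.v *)
Require Import Defs.
From HB Require Import structures.
From mathcomp Require Import all_boot all_order all_algebra.
From mathcomp Require Import boolp.
From Stdlib Require Import Inverse_Image.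
Import Order.TTheory GRing.Theory.
Local Open Scope order_scope.

Section WF.
Variables (d : Order.disp_t) (P : porderType d).

Lemma dcc_wf : dcc P -> well_founded (fun x y : P => x < y).
Proof.
move=> H a; apply: contrapT => Na.
pose NA := fun x : P => ~ Acc (fun x y : P => x < y) x.
have st : forall x : {x | NA x}, exists y : {y | NA y}, sval y < sval x.
  case=> x Nx /=; apply: contrapT => Hn; apply: Nx; constructor => y yx.
  apply: contrapT => Ny; apply: Hn; by exists (exist _ y Ny).
pose f := fun x => sval (cid (st x)).
pose g := fun n => iter n f (exist _ a Na).
apply: (H (fun n => sval (g n))) => n /=.
rewrite /g /= ; exact: (svalP (cid (st _))).
Qed.

Definition mstep (l' l : seq P) := exists j, j \in l /\ exists s,
  all (fun k => k < j) s /\ perm_eq l' ([seq k <- l | k != j] ++ s).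

Lemma Acc_perm l1 l2 : perm_eq l1 l2 -> Acc mstep l1 -> Acc mstep l2.
Proof.
move=> pe A; constructor => l' [j [jl [s [sj pl']]]]; apply: (Acc_inv A).
exists j; split; first by rewrite (perm_mem pe).
exists s; split => //; rewrite (permPl pl') perm_cat2r.
by apply: perm_filter; rewrite perm_sym.
Qed.

Lemma Acc_filter a l : Acc mstep l -> Acc mstep [seq k <- l | k != a].
Proof.
case: (boolP (a \in l)) => al A.
  by apply: (Acc_inv A); exists a; split => //; exists [::]; split => //; rewrite cats0.
have -> : [seq k <- l | k != a] = l => //.
apply/all_filterP/allP => k kl; apply/eqP => ka; by rewrite -ka kl in al.
Qed.

Lemma Acc_cons : well_founded (fun x y : P => x < y) ->
  forall a l, Acc mstep l -> Acc mstep (a :: l).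
Proof.
move=> Hwf a; elim/(well_founded_induction Hwf): a => a IHa l A.
elim: A => {}l HA IHl.
constructor => l'' [j [jl [s [sj pl]]]].
apply: (Acc_perm ([seq k <- a :: l | k != j] ++ s) l''); first by rewrite perm_sym.
case: (eqVneq j a) => [ej|ja].
  subst j; rewrite /= eqxx /=.
  have A' := Acc_filter a l (Acc_intro l HA).
  apply: (Acc_perm (s ++ [seq k <- l | k != a])); first by rewrite perm_catC.
  clear pl; elim: s sj => [|b s IHs]; first by move=> _; exact: A'.
  move=> /= /andP [ba sa].
  apply: IHa; first exact: ba.
  exact: IHs.
rewrite /= eq_sym ja /=.
rewrite inE (negPf ja) /= in jl.
apply: IHl; exists j; split; first exact: jl.
exists s; split; first exact: sj.
exact: perm_refl.
Qed.

Lemma mstep_wf : well_founded (fun x y : P => x < y) -> well_founded mstep.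
Proof.
move=> Hwf; elim => [|a l IH].
  by constructor => l' [j [jl _]]; rewrite in_nil in jl.
exact: Acc_cons.
Qed.

Lemma exists_max (J : seq P) : J != [::] -> exists j, is_max_in J j.
Proof.
elim: J => [//|a J IH] _.
case: (eqVneq J [::]) => [->|Jn].
  by exists a; split; rewrite ?mem_head // => k; rewrite inE => /eqP ->; rewrite ltxx.
have [m [mJ mmax]] := IH Jn.
case: (boolP (m < a)) => ma.
  exists a; split; first exact: mem_head.
  move=> k; rewrite inE => /orP [/eqP ->|kJ]; first by rewrite ltxx.
  move=> ak; apply: (mmax k kJ); exact: lt_trans ma ak.
exists m; split; first by rewrite inE mJ orbT.
move=> k; rewrite inE => /orP [/eqP ->|kJ]; first by move=> h; rewrite h in ma.
exact: mmax.
Qed.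
End WF.

Section Main.
Variables (R : comPzRingType) (d : Order.disp_t) (P : porderType d)
  (F : P -> lmodType R) (Fm : forall j k, {linear F j -> F k}) (i : P)
  (C : lmodType R) (iota : forall j, {linear F j -> C}).
Local Open Scope ring_scope.

Definition sumI (L : seq {k : P & F k}) : C :=
  \sum_(p <- L) iota (tag p) (tagged p).
Definition sumF (L : seq {k : P & F k}) : F i :=
  \sum_(p <- L) Fm (tag p) i (tagged p).
Definition lti (L : seq {k : P & F k}) := all (fun p => (tag p < i)%O) L.

Definition Spn (c : C) : Prop := exists L, lti L /\ c = sumI L.

Lemma Spn_closed : submod_closed (fun c => `[< Spn c >]).
Proof.
split.
  by apply/asboolP; exists [::]; split => //; rewrite /sumI big_nil.
move=> a u v /asboolP [L1 [h1 ->]] /asboolP [L2 [h2 ->]]; apply/asboolP.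
exists ([seq existT (fun k => F k) (tag p) (a *: tagged p) | p <- L1] ++ L2).
split.
  rewrite /lti all_cat all_map; apply/andP; split; last exact: h2.
  by apply: sub_all h1 => p.
rewrite /sumI big_cat big_map /= scaler_sumr; congr (_ + _).
by apply: eq_bigr => p _; rewrite linearZ.
Qed.

Definition Sb : pred C := fun c => `[< Spn c >].
Definition W := {c : C | Sb c}.
HB.instance Definition _ := [isSub of W for @sval C Sb].
HB.instance Definition _ := [Choice of W by <:].
HB.instance Definition _ := GRing.SubChoice_isSubLmodule.Build R C Sb W
  (GRing.submod_closed_semi Spn_closed).

Lemma iota_Sb j (x : F j) : (j < i)%O -> Sb (iota j x).
Proof.
move=> ji; apply/asboolP; exists [:: existT (fun k => F k) j x]; split.
  by rewrite /lti /= ji.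
by rewrite /sumI big_cons big_nil addr0.
Qed.

Definition gf j (x : F j) : W := if (j < i)%O then insubd 0 (iota j x) else 0.

Lemma val_gf j x : sval (gf j x) = if (j < i)%O then iota j x else 0.
Proof.
rewrite /gf; case: ifP => ji; last by [].
by rewrite insubdK //; apply: iota_Sb.
Qed.

Lemma gf_lin j : linear (gf j).
Proof.
move=> a x y; apply: val_inj.
rewrite raddfD /=.
rewrite !val_gf.
by case: ifP => _; rewrite ?linearP ?scaler0 ?addr0.
Qed.
HB.instance Definition _ j := GRing.isLinear.Build R (F j) W *:%R (gf j) (gf_lin j).
Definition g j : {linear F j -> W} := GRing.Linear.clone _ _ _ _ (gf j) _.
Definition vh (h : {linear C -> W}) (c : C) : C := sval (h c).
Lemma vh_lin h : linear (vh h).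
Proof. move=> a x y; rewrite /vh linearP.
change (val (a *: h x + h y) = a *: val (h x) + val (h y)).
rewrite raddfD; congr (_ + _). Qed.
HB.instance Definition _ h := GRing.isLinear.Build R C C *:%R (vh h) (vh_lin h).
Definition idl (c : C) : C := c.
Lemma idl_lin : linear idl. Proof. by []. Qed.
HB.instance Definition _ := GRing.isLinear.Build R C C *:%R idl idl_lin.

Lemma span_all : is_colimit_lt Fm i iota -> forall c, Spn c.
Proof.
move=> [Hcoc Huniv] c.
have cg : cocone_lt Fm i g.
  move=> j k x jk ki; apply: val_inj; rewrite /= !val_gf ki (lt_trans jk ki).
  exact: Hcoc.
have [h [hg _]] := Huniv W g cg.
have [h0 [_ h0u]] := Huniv C iota Hcoc.
have e1 := h0u (GRing.Linear.clone _ _ _ _ (vh h) _).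
have e2 := h0u (GRing.Linear.clone _ _ _ _ idl _).
have : vh h c = c.
  rewrite e1; last first.
    move=> j x ji /=; rewrite /vh hg //.
    by have := val_gf j x; rewrite ji.
  by rewrite -(e2 _ c).
move=> <-; apply/asboolP; exact: (svalP (h c)).
Qed.
End Main.
Arguments sumI {R d P F C} iota L.
Arguments sumF {R d P F} Fm i L.
Arguments lti {R d P F} i L.

Section Key.
Variables (R : comPzRingType) (d : Order.disp_t) (P : porderType d)
  (F : P -> lmodType R) (Fm : forall j k, {linear F j -> F k}) (i : P)
  (C : lmodType R) (iota : forall j, {linear F j -> C})
  (u : {linear C -> F i}).
Hypotheses (Hwf : well_founded (fun x y : P => (x < y)%O))
  (Hfun : is_functor Fm) (Hpp : pseudo_projective_at Fm i)
  (Hcoc : cocone_lt Fm i iota)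
  (Hu : forall j (x : F j), (j < i)%O -> u (iota j x) = Fm j i x).
Local Open Scope ring_scope.

Notation T := {k : P & F k}.

Lemma u_sumI (L : seq T) : lti i L -> u (sumI iota L) = sumF Fm i L.
Proof.
move=> /allP hL; rewrite /sumI /sumF linear_sum; apply: eq_big_seq => p pL.
exact: Hu (hL p pL).
Qed.

Lemma sum_part (V : nmodType) (L : seq T) (G : T -> V) :
  \sum_(j <- undup (map (@tag P (fun k => F k)) L)) \sum_(p <- L | tag p == j) G p
  = \sum_(p <- L) G p.
Proof.
under eq_bigr do rewrite big_mkcond.
rewrite exchange_big /=; apply: eq_big_seq => p pL.
rewrite (bigD1_seq (tag p)) ?undup_uniq ?mem_undup ?map_f //= eqxx.
rewrite big1 ?addr0 // => j /negPf jn; by rewrite eq_sym jn.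
Qed.

Lemma key (L : seq T) : lti i L -> sumF Fm i L = 0 -> sumI iota L = 0.
Proof.
elim/(well_founded_induction (wf_inverse_image _ _ (@mstep d P) (map (@tag P (fun k => F k))) (@mstep_wf d P Hwf))): L => L IH hL h0.
case: (eqVneq L [::]) => [->|Ln]; first by rewrite /sumI big_nil.
have [p0 p0L] : exists p, p \in L.
  by case: L Ln {IH hL h0} => // p L' _; exists p; exact: mem_head.
pose J := undup (map (@tag P (fun k => F k)) L).
pose X := fun j => \sum_(p <- L | tag p == j) Fm (tag p) j (tagged p).
have Jn : J != [::].
  apply/negP => /eqP J0; have : tag p0 \in J by rewrite mem_undup map_f.
  by rewrite J0.
have [j jmax] := @exists_max d P J Jn.
have hJ : forall k, k \in J -> (k < i)%O.
  move=> k; rewrite mem_undup => /mapP [p pL ->]; exact: (allP hL p pL).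
have hX : ImF Fm (X j).
  apply: (Hpp J X (undup_uniq _)) => //.
    by move=> k kJ; apply: ltW; apply: hJ.
  transitivity (sumF Fm i L); last exact: h0.
  rewrite /sumF -(sum_part _ L (fun p => Fm (tag p) i (tagged p))).
  apply: eq_bigr => k _; rewrite /X linear_sum; apply: eq_bigr => p /eqP e.
  by case: p e => k' v /= e; subst k; rewrite (proj1 Hfun).
have [s [y [hs hXj]]] := hX.
have jJ : j \in J := proj1 jmax.
have ji := hJ j jJ.
have jL : j \in map (@tag P (fun k => F k)) L by rewrite -mem_undup.
pose L' := [seq p <- L | tag p != j] ++ [seq existT (fun k => F k) k (y k) | k <- s].
have ms : map (@tag P (fun k => F k)) [seq existT (fun k => F k) k (y k) | k <- s] = s.
  by rewrite -map_comp; elim: (s) => //= k s' ->.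
have st : mstep d P (map (@tag P (fun k => F k)) L') (map (@tag P (fun k => F k)) L).
  exists j; split => //; exists s; split.
    by apply/allP => k ks; apply: hs.
  by rewrite /L' map_cat ms filter_map perm_refl.
have hL' : lti i L'.
  rewrite /lti all_cat all_map; apply/andP; split.
    by apply/allP => p; rewrite mem_filter => /andP [_ pL]; exact: (allP hL p pL).
  by apply/allP => k ks /=; apply: lt_trans (hs k ks) ji.
have eI : sumI iota L' = sumI iota L.
  rewrite /sumI big_cat big_filter big_map /=.
  rewrite [RHS](bigID (fun p => tag p == j)) /= addrC; congr (_ + _).
  transitivity (iota j (X j)).
    rewrite hXj linear_sum; apply: eq_big_seq => k ks; symmetry; exact: Hcoc (hs k ks) ji.
  rewrite /X linear_sum; apply: eq_bigr => p /eqP e.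
  by case: p e => k v /= e; subst k; rewrite (proj1 Hfun).
have h0' : sumF Fm i L' = 0 by rewrite -u_sumI // eI u_sumI.
by rewrite -eI; apply: IH.
Qed.
End Key.

Theorem lemma6p2 (R : comPzRingType) (d : Order.disp_t) (P : porderType d)
  (F : P -> lmodType R) (Fm : forall j k, {linear F j -> F k}) (i : P)
  (C : lmodType R) (iota : forall j, {linear F j -> C})
  (u : {linear C -> F i}) :
  dcc P -> is_functor Fm -> pseudo_projective_at Fm i ->
  is_colimit_lt Fm i iota ->
  (forall j (x : F j), j < i -> u (iota j x) = Fm j i x) ->
  injective u.
Proof.
move=> Hdcc Hfun Hpp Hcol Hu c1 c2 e.
have Hwf := @dcc_wf d P Hdcc.
apply/eqP; rewrite -subr_eq0; apply/eqP.
have [L [hL hc]] := @span_all R d P F Fm i C iota Hcol (c1 - c2).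
rewrite hc; apply: (@key R d P F Fm i C iota u Hwf Hfun Hpp (proj1 Hcol) Hu _ hL).
by rewrite -(@u_sumI R d P F Fm i C iota u Hu _ hL) -hc linearB e subrr.
Qed.
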